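(* For $n\geq 3$, the group $\Gamma_2(VP_n)/\Gamma_3(VP_n)$ is a free abelian group of rank $n(n-1)(2n-3)/2$.
   Context: The virtual pure braid group $VP_n$ is the group with generators $\lambda_{k,l}$, $1\le k\neq l\le n$, and defining relations $\lambda_{i,j}\lambda_{k,l}=\lambda_{k,l}\lambda_{i,j}$ and $\lambda_{k,i}\lambda_{k,j}\lambda_{i,j}=\lambda_{i,j}\lambda_{k,j}\lambda_{k,i}$, where distinct letters stand for distinct indices. (Equivalently, it is the kernel of the homomorphism from the virtual braid group $VB_n$ to $S_n$ sending both $\sigma_i$ and $\rho_i$ to the transposition $(i\ i{+}1)$.) For a group $G$, $\Gamma_1(G)=G$, $\Gamma_i(G)=[\Gamma_{i-1}(G),G]$. *)

(* Defs.v *)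
(* The virtual pure braid group VP_n is encoded by its
   presentation: words in the generators lambda_{k,l} (k <> l) and their
   inverses, modulo the congruence generated by free cancellation and the
   defining relators. *)
From mathcomp Require Import all_boot all_algebra.
From Stdlib Require Import Relation_Operators.
Set Implicit Arguments. Unset Strict Implicit. Unset Printing Implicit Defensive.
Import GRing.Theory.
Local Open Scope ring_scope.

(* generators lambda_{k,l}, 1 <= k <> l <= n, indexed here by 'I_n *)
Definition vgen (n : nat) := {p : 'I_n * 'I_n | p.1 != p.2}.

(* letters: (generator, true) = generator, (generator, false) = its inverse *)
Definition vletter (n : nat) := (vgen n * bool)%type.
Definition vword (n : nat) := seq (vletter n).

Definition linv n (x : vletter n) : vletter n := (x.1, ~~ x.2).
Definition winv n (w : vword n) : vword n := rev (map (@linv n) w).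

Definition pos n (x : vgen n) : vletter n := (x, true).
Definition neg n (x : vgen n) : vletter n := (x, false).

(* defining relators (left side times inverse of right side) *)
Definition vrelator n (r : vword n) : Prop :=
  (* lambda_{ij} lambda_{kl} = lambda_{kl} lambda_{ij}, i,j,k,l distinct *)
  (exists x y : vgen n,
      uniq [:: (val x).1; (val x).2; (val y).1; (val y).2] /\
      r = [:: pos x; pos y; neg x; neg y])
  \/
  (* lambda_{ki} lambda_{kj} lambda_{ij} = lambda_{ij} lambda_{kj} lambda_{ki},
     k,i,j distinct *)
  (exists x y z : vgen n,
      uniq [:: (val x).1; (val x).2; (val y).2] /\
      (val y).1 = (val x).1 /\ (val z).1 = (val x).2 /\ (val z).2 = (val y).2 /\
      r = [:: pos x; pos y; pos z; neg x; neg y; neg z]).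

Definition vstep n (u v : vword n) : Prop :=
  exists a b s : vword n, u = a ++ s ++ b /\ v = a ++ b /\
    ((exists x : vletter n, s = [:: x; linv x]) \/ vrelator s).

Definition veq n : vword n -> vword n -> Prop := clos_refl_sym_trans _ (@vstep n).

Definition vcomm n (a b : vword n) : vword n := winv a ++ winv b ++ a ++ b.

Inductive vgenerated n (S : vword n -> Prop) : vword n -> Prop :=
| vgen_S w : S w -> vgenerated S w
| vgen_nil : vgenerated S [::]
| vgen_mul u v : vgenerated S u -> vgenerated S v -> vgenerated S (u ++ v)
| vgen_inv u : vgenerated S u -> vgenerated S (winv u)
| vgen_eq u v : veq u v -> vgenerated S u -> vgenerated S v.

(* lower central series: Gamma 1 = G, Gamma (i+1) = [Gamma i, G]
   (Gamma 0 is also set to G) *)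
Fixpoint Gamma n (i : nat) : vword n -> Prop :=
  match i with
  | 0 => fun _ => True
  | j.+1 => match j with
            | 0 => fun _ => True
            | _ => vgenerated (fun w => exists a b, @Gamma n j a /\ w = vcomm a b)
            end
  end.

(* Gamma_2 / Gamma_3 is isomorphic to Z^r: a homomorphism on Gamma_2 onto
   Z^r whose kernel is exactly Gamma_3 *)
Definition G2modG3_free_of_rank n (r : nat) : Prop :=
  exists f : vword n -> 'rV[int]_r,
    (forall u v, @Gamma n 2 u -> @Gamma n 2 v -> f (u ++ v) = f u + f v) /\
    (forall z : 'rV[int]_r, exists u, @Gamma n 2 u /\ f u = z) /\
    (forall u, @Gamma n 2 u -> (f u = 0 <-> @Gamma n 3 u)).

(* Main.v *)
Require Import Defs.
From mathcomp Require Import all_boot all_algebra zify.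
From Stdlib Require Import Relation_Operators Setoid Morphisms.
Set Implicit Arguments. Unset Strict Implicit. Unset Printing Implicit Defensive.
Import GRing.Theory.

Section Free.
Variable n : nat.
Implicit Types u v w a b g s : vword n.

Lemma linvK (x : vletter n) : linv (linv x) = x.
Proof. by case: x => g e; rewrite /linv /= negbK. Qed.
Lemma winv_cat u v : winv (u ++ v) = winv v ++ winv u.
Proof. by rewrite /winv map_cat rev_cat. Qed.
Lemma winvK u : winv (winv u) = u.
Proof. by rewrite /winv map_rev revK -map_comp; elim: u => //= x u ->; rewrite linvK. Qed.
Lemma winv_cons x u : winv (x :: u) = winv u ++ [:: linv x].
Proof. by rewrite /winv /= rev_cons -cats1. Qed.

Lemma veq_refl u : veq u u. Proof. exact: rst_refl. Qed.
Lemma veq_sym u v : veq u v -> veq v u. Proof. exact: rst_sym. Qed.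
Lemma veq_trans u v w : veq u v -> veq v w -> veq u w. Proof. exact: rst_trans. Qed.

#[local] Hint Resolve veq_refl : core.
Global Instance veq_Equiv : Equivalence (@veq n).
Proof. split; [exact: veq_refl|exact: veq_sym|exact: veq_trans]. Qed.

Lemma veq_ctx a b u v : veq u v -> veq (a ++ u ++ b) (a ++ v ++ b).
Proof.
elim=> {u v} [u v [a' [b' [s [-> [-> H]]]]]|u|u v _ IH|u v w _ IH1 _ IH2].
- apply: rst_step; exists (a ++ a'), (b' ++ b), s; split; last split => //.
  by rewrite -!catA. by rewrite -!catA.
- reflexivity.
- by symmetry.
- by transitivity (a ++ v ++ b).
Qed.

Global Instance cat_veq : Proper (@veq n ==> @veq n ==> @veq n) cat.
Proof.
move=> u u' Hu v v' Hv; transitivity (u' ++ v).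
  by have := veq_ctx [::] v Hu; rewrite /= .
by have := veq_ctx u' [::] Hv; rewrite !cats0.
Qed.

Global Instance cons_veq : Proper (eq ==> @veq n ==> @veq n) cons.
Proof. by move=> x y -> u v H; have := veq_ctx [:: y] [::] H; rewrite !cats0. Qed.

Lemma veq_cancel x b : veq (x :: linv x :: b) b.
Proof. by apply: rst_step; exists [::], b, [:: x; linv x]; split => //; split => //; left; exists x. Qed.
Lemma veq_cancel' x b : veq (linv x :: x :: b) b.
Proof. by have := veq_cancel (linv x) b; rewrite linvK. Qed.

Lemma veq_rinv u b : veq (u ++ winv u ++ b) b.
Proof.
elim: u b => [|x u IH] b /=; first reflexivity.
rewrite winv_cons -catA /= IH; exact: veq_cancel.
Qed.
Lemma veq_linv u b : veq (winv u ++ u ++ b) b.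
Proof. by have := veq_rinv (winv u) b; rewrite winvK. Qed.

Lemma veq_rinv0 u : veq (u ++ winv u) [::].
Proof. by have := veq_rinv u [::]; rewrite cats0. Qed.
Lemma veq_linv0 u : veq (winv u ++ u) [::].
Proof. by have := veq_linv u [::]; rewrite cats0. Qed.

Lemma veq_rel s : vrelator s -> veq s [::].
Proof. move=> H; apply: rst_step; exists [::], [::], s; rewrite cats0; split => //; split => //; by right. Qed.

Definition conj g w := winv g ++ w ++ g.

Lemma conj_veq g u v : veq u v -> veq (conj g u) (conj g v).
Proof. by move=> H; rewrite /conj H. Qed.

Lemma conj_cat g u v : veq (conj g (u ++ v)) (conj g u ++ conj g v).
Proof. by rewrite /conj -!catA (veq_rinv g). Qed.

Lemma conj_winv g u : conj g (winv u) = winv (conj g u).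
Proof. by rewrite /conj !winv_cat winvK catA. Qed.

Lemma conj_nil g : veq (conj g [::]) [::].
Proof. exact: veq_linv0. Qed.

Lemma conj_comm g a b : veq (conj g (vcomm a b)) (vcomm (conj g a) (conj g b)).
Proof.
rewrite /conj /vcomm !winv_cat !winvK -!catA.
by rewrite (veq_rinv g) (veq_rinv g) (veq_rinv g).
Qed.

Lemma vgen_cat (S : vword n -> Prop) u v : vgenerated S u -> vgenerated S v -> vgenerated S (u ++ v).
Proof. exact: vgen_mul. Qed.

Lemma vgen_conj (S : vword n -> Prop) :
  (forall g w, S w -> vgenerated S (conj g w)) ->
  forall g w, vgenerated S w -> vgenerated S (conj g w).
Proof.
move=> HS g w; elim=> {w} [w Sw|||u Hu IH|u v Huv _ IH].
- exact: HS.
- apply: vgen_eq (vgen_nil S); symmetry; exact: conj_nil.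
- move=> u v _ IHu _ IHv; apply: vgen_eq (vgen_mul IHu IHv); symmetry; exact: conj_cat.
- rewrite conj_winv; exact: vgen_inv.
- apply: vgen_eq IH; exact: conj_veq.
Qed.

End Free.


#[global] Hint Resolve veq_refl : core.

Section Gam.
Variable n : nat.
Implicit Types u v w a b g s : vword n.

Definition S2 : vword n -> Prop := fun w => exists a b, @Gamma n 1 a /\ w = vcomm a b.
Definition G2 := vgenerated S2.
Definition S3 : vword n -> Prop := fun w => exists a b, G2 a /\ w = vcomm a b.
Definition G3 := vgenerated S3.
Lemma G2E : @Gamma n 2 = G2. Proof. by []. Qed.
Lemma G3E : @Gamma n 3 = G3. Proof. by []. Qed.

Lemma G2_comm a b : G2 (vcomm a b).
Proof. by apply: vgen_S; exists a, b. Qed.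
Lemma G3_comm a b : G2 a -> G3 (vcomm a b).
Proof. by move=> H; apply: vgen_S; exists a, b. Qed.

Lemma G2_conj g w : G2 w -> G2 (conj g w).
Proof.
apply: vgen_conj => {}g {}w [a [b [_ ->]]].
apply: vgen_eq (G2_comm (conj g a) (conj g b)); symmetry; exact: conj_comm.
Qed.

Lemma G3_conj g w : G3 w -> G3 (conj g w).
Proof.
apply: vgen_conj => {}g {}w [a [b [Ha ->]]].
apply: vgen_eq (G3_comm (conj g b) (G2_conj g Ha)); symmetry; exact: conj_comm.
Qed.

Lemma G3_G2 w : G3 w -> G2 w.
Proof.
elim=> {w} [w [a [b [_ ->]]]|||u _ IH|u v H _ IH].
- exact: G2_comm.
- exact: vgen_nil.
- by move=> u v _ Hu _ Hv; apply: vgen_mul.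
- exact: vgen_inv.
- exact: vgen_eq H IH.
Qed.

Lemma G3_veq u v : veq u v -> G3 u -> G3 v.
Proof. move=> H Hu; exact: vgen_eq H Hu. Qed.
Lemma G2_veq u v : veq u v -> G2 u -> G2 v.
Proof. move=> H Hu; exact: vgen_eq H Hu. Qed.

Definition meq u v := G3 (u ++ winv v).

Lemma meq_refl u : meq u u.
Proof. apply: G3_veq (vgen_nil _); symmetry; exact: veq_rinv0. Qed.
#[local] Hint Resolve meq_refl : core.
Lemma meq_sym u v : meq u v -> meq v u.
Proof. by move=> H; have := vgen_inv H; rewrite winv_cat winvK. Qed.
Lemma meq_trans u v w : meq u v -> meq v w -> meq u w.
Proof.
move=> H1 H2; have := vgen_mul H1 H2; apply: G3_veq.
by rewrite -catA (veq_linv v).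
Qed.

Global Instance meq_Equiv : Equivalence meq.
Proof. split; [exact: meq_refl|exact: meq_sym|exact: meq_trans]. Qed.

Lemma meqE u v : G3 (winv v ++ u) -> meq u v.
Proof.
move=> H; have := G3_conj (winv v) H; apply: G3_veq.
by rewrite /conj winvK -!catA (veq_rinv v).
Qed.

Lemma veq_meq u v : veq u v -> meq u v.
Proof. move=> H; apply: G3_veq (meq_refl v); by rewrite H. Qed.

Global Instance veq_meq_sub : subrelation (@veq n) meq.
Proof. exact: veq_meq. Qed.

Lemma meq_catl a u v : meq u v -> meq (a ++ u) (a ++ v).
Proof.
move=> H; have := G3_conj (winv a) H; apply: G3_veq.
by rewrite /conj winvK winv_cat !catA.
Qed.
Lemma meq_catr b u v : meq u v -> meq (u ++ b) (v ++ b).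
Proof.
move=> H; apply: G3_veq H; rewrite /meq winv_cat -!catA.
by rewrite (veq_rinv b).
Qed.

Global Instance cat_meq : Proper (meq ==> meq ==> meq) cat.
Proof.
move=> u u' Hu v v' Hv; transitivity (u' ++ v); first exact: meq_catr.
exact: meq_catl.
Qed.
Global Instance cons_meq : Proper (eq ==> meq ==> meq) cons.
Proof. by move=> x y -> u v H; apply: (meq_catl [:: y] H). Qed.

Global Instance winv_meq : Proper (meq ==> meq) (@winv n).
Proof.
move=> u v H; apply: meqE; rewrite winvK.
by have := vgen_inv H; rewrite winv_cat winvK.
Qed.

Lemma G3_meq u : G3 u <-> meq u [::].
Proof. by rewrite /meq /= cats0. Qed.

Lemma meq_G3 u v : meq u v -> G3 u -> G3 v.
Proof.
move=> H Hu; apply/G3_meq; rewrite -H; exact: (proj1 (G3_meq u) Hu).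
Qed.

Lemma meq_central x g : G2 x -> meq (x ++ g) (g ++ x).
Proof.
move=> Hx; apply: meqE; rewrite winv_cat -!catA; exact: G3_comm.
Qed.

Lemma meq_conj x g : G2 x -> meq (conj g x) x.
Proof.
move=> Hx; rewrite /conj (@meq_central x g Hx).
by rewrite (veq_linv g).
Qed.

End Gam.
#[global] Hint Resolve meq_refl : core.



Section Comm.
Variable n : nat.
Implicit Types u v w a b g s : vword n.

Lemma comm_catl a1 a2 b : meq (vcomm (a1 ++ a2) b) (vcomm a1 b ++ vcomm a2 b).
Proof.
have H : veq (conj a2 (vcomm a1 b) ++ vcomm a2 b) (vcomm (a1 ++ a2) b).
  rewrite /conj /vcomm !winv_cat -!catA (veq_rinv a2) (veq_rinv b) //.
rewrite -H; apply: meq_catr; apply: meq_conj; exact: G2_comm.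
Qed.

Lemma comm_catr a b1 b2 : meq (vcomm a (b1 ++ b2)) (vcomm a b2 ++ vcomm a b1).
Proof.
have H : veq (vcomm a b2 ++ conj b2 (vcomm a b1)) (vcomm a (b1 ++ b2)).
  rewrite /conj /vcomm !winv_cat -!catA (veq_rinv b2) (veq_rinv a) //.
rewrite -H; apply: meq_catl; apply: meq_conj; exact: G2_comm.
Qed.

Lemma comm_nill b : veq (vcomm [::] b) [::].
Proof. exact: veq_linv0. Qed.
Lemma comm_nilr a : veq (vcomm a [::]) [::].
Proof. by rewrite /vcomm /= cats0; exact: veq_linv0. Qed.

Lemma meq_inv_r u v : meq (u ++ v) [::] -> meq v (winv u).
Proof.
move=> H; rewrite -[v](veq_linv u) -/(winv u ++ (u ++ v)).
by rewrite H cats0.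
Qed.

Lemma comm_invl x b : meq (vcomm [:: linv x] b) (winv (vcomm [:: x] b)).
Proof.
apply: meq_inv_r.
rewrite -comm_catl /vcomm /= linvK.
by rewrite (veq_cancel x) (veq_cancel x) (veq_linv0 b).
Qed.

Lemma comm_invr a y : meq (vcomm a [:: linv y]) (winv (vcomm a [:: y])).
Proof.
apply: meq_inv_r.
rewrite -comm_catr /vcomm /= linvK.
rewrite (veq_cancel' y) -[[:: linv y; y]]/([:: linv y, y & [::]]) (veq_cancel' y).
by rewrite cats0 (veq_linv0 a).
Qed.
End Comm.


Local Open Scope ring_scope.
Section Abel.
Variable n : nat.
Implicit Types u v w a b g s : vword n.

Fixpoint sumw (F : vgen n -> int) w : int :=
  match w with [::] => 0 | l :: w' => (if l.2 then F l.1 else - F l.1) + sumw F w' end.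

Definition Ztriv w := forall F, sumw F w = 0.

Lemma sumw_cat F u v : sumw F (u ++ v) = sumw F u + sumw F v.
Proof. by elim: u => [|l u IH] /=; rewrite ?add0r // IH addrA. Qed.

Lemma sumw_winv F u : sumw F (winv u) = - sumw F u.
Proof.
elim: u => [|[g e] u IH] /=; first lia.
rewrite winv_cons sumw_cat IH /=; case: e => /=; lia.
Qed.

Lemma sumw_ext F G w : F =1 G -> sumw F w = sumw G w.
Proof. by move=> H; elim: w => //= l w ->; rewrite H. Qed.

Lemma sumw_add F G w : sumw (fun x => F x + G x) w = sumw F w + sumw G w.
Proof.
elim: w => [|[g e] w IH] //=; rewrite IH; case: e; rewrite ?opprD; lia.
Qed.

Lemma sumw_0 w : sumw (fun _ => 0) w = 0.
Proof. by elim: w => //= l w ->; case: l.2; rewrite ?oppr0 addr0. Qed.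

Lemma Ztriv_nil : Ztriv [::]. Proof. by []. Qed.
Lemma Ztriv_cat u v : Ztriv u -> Ztriv v -> Ztriv (u ++ v).
Proof. by move=> Hu Hv F; rewrite sumw_cat Hu Hv addr0. Qed.
Lemma Ztriv_winv u : Ztriv u -> Ztriv (winv u).
Proof. by move=> Hu F; rewrite sumw_winv Hu oppr0. Qed.
Lemma Ztriv_comm a b : Ztriv (vcomm a b).
Proof. move=> F; rewrite /vcomm !sumw_cat !sumw_winv; lia. Qed.

Lemma Ztriv_step s : ((exists x : vletter n, s = [:: x; linv x]) \/ vrelator s) -> Ztriv s.
Proof.
case=> [[[g e] ->]|[[x [y [_ ->]]]|[x [y [z [_ [_ [_ [_ ->]]]]]]]]] F /=.
- by case: e => /=; lia.
- lia.
- lia.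
Qed.

Lemma sumw_veq F u v : veq u v -> sumw F u = sumw F v.
Proof.
elim=> {u v} [u v [a [b [s [-> [-> H]]]]]|u|u v _ IH|u v w _ IH1 _ IH2] //.
- by rewrite !sumw_cat (Ztriv_step H) add0r.
- by rewrite IH1 IH2.
Qed.

Lemma Ztriv_veq u v : veq u v -> Ztriv u -> Ztriv v.
Proof. by move=> H Hu F; rewrite -(sumw_veq F H). Qed.

Lemma Ztriv_G2 u : G2 u -> Ztriv u.
Proof.
elim=> {u} [u [a [b [_ ->]]]|||u _ IH|u v H _ IH].
- exact: Ztriv_comm.
- exact: Ztriv_nil.
- by move=> u v _ Hu _ Hv; apply: Ztriv_cat.
- exact: Ztriv_winv.
- exact: Ztriv_veq H IH.
Qed.

Variable beta : vgen n -> vgen n -> int.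
Hypothesis beta0 : forall x, beta x x = 0.

Definition lin x w := sumw (beta x) w.
Fixpoint cw w : int :=
  match w with [::] => 0 | l :: w' => cw w' + (if l.2 then lin l.1 w' else - lin l.1 w') end.
Definition cross u v := sumw (fun x => lin x v) u.

Lemma cw_cat u v : cw (u ++ v) = cw u + cw v + cross u v.
Proof.
rewrite /cross; elim: u => [|[g e] u IH] /=; first lia.
rewrite IH /lin sumw_cat; case: e => /=; lia.
Qed.

Lemma cross0l u v : Ztriv u -> cross u v = 0.
Proof. by move=> H; apply: H. Qed.
Lemma cross0r u v : Ztriv v -> cross u v = 0.
Proof. by move=> H; rewrite /cross (sumw_ext _ (G := fun _ => 0)) ?sumw_0 // => x; apply: H. Qed.

Hypothesis Hrel : forall s, vrelator s -> cw s = 0.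

Lemma cw_step u v : vstep u v -> cw u = cw v.
Proof.
move=> [a [b [s [-> [-> H]]]]].
have Zs := Ztriv_step H.
have cs : cw s = 0.
  case: H => [[[g e] ->]|/Hrel //].
  rewrite /= /lin /=; case: e => /=; rewrite beta0; lia.
rewrite !cw_cat cs (cross0l _ Zs).
have -> : cross a (s ++ b) = cross a b.
  by apply: sumw_ext => x; rewrite /lin sumw_cat Zs add0r.
lia.
Qed.

Lemma cw_veq u v : veq u v -> cw u = cw v.
Proof.
elim=> {u v} [u v /cw_step //|u //|u v _ IH //|u v w _ IH1 _ IH2].
by rewrite IH1 IH2.
Qed.

End Abel.

Local Close Scope ring_scope.

Section Count.

Lemma card_pair_dep (T1 T2 : finType) (P : pred T1) (Q : T1 -> pred T2) :
  #|[pred t : T1 * T2 | P t.1 && Q t.1 t.2]| = \sum_(x | P x) #|Q x|.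
Proof.
rewrite -sum1_card -(pair_big_dep P Q (fun _ _ => 1%N)) /=.
by apply: eq_bigr => i _; rewrite sum1_card.
Qed.

Lemma sum_gt m i : (\sum_(j < m) (if i < j then 1 else 0) = m - i.+1)%N.
Proof.
elim: m => [|m IH]; first by rewrite big_ord0.
rewrite big_ord_recr /= IH; case: ltnP => h; lia.
Qed.

Lemma card_gt m (i : 'I_m) : #|[pred j : 'I_m | i < j]| = (m - i.+1)%N.
Proof. by rewrite -sum1_card big_mkcond /= sum_gt. Qed.

Lemma sum_tri m : (2 * \sum_(i < m) (m - i.+1) = m * (m - 1))%N.
Proof.
elim: m => [|m IH]; first by rewrite big_ord0.
rewrite big_ord_recl /=.
have -> : (\sum_(i < m) (m.+1 - (bump 0 i).+1) = \sum_(i < m) (m - i.+1))%N.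
  by apply: eq_bigr => i _; rewrite /bump /=; lia.
move: IH; case: m => [|m] IH; first by rewrite big_ord0.
nia.
Qed.

End Count.

Section Basis.
Variable n : nat.

Definition BA := {p : 'I_n * 'I_n | p.1 < p.2}.
Definition BF := {t : ('I_n * 'I_n) * 'I_n | (t.1.1 < t.1.2) && (t.2 != t.1.1) && (t.2 != t.1.2)}.
Definition B := (BA + (BF + BF))%type.

Definition key (b : B) : nat * ('I_n * 'I_n * 'I_n) :=
  match b with
  | inl p => (0, ((val p).1, (val p).2, (val p).1))
  | inr (inl t) => (1, ((val t).1.1, (val t).1.2, (val t).2))
  | inr (inr t) => (2, ((val t).1.1, (val t).1.2, (val t).2))
  end%N.

Lemma key_inj : injective key.
Proof.
move=> [[[a b] ?]|[[[[i j] k] ?]|[[[i j] k] ?]]] [[[a' b'] ?]|[[[[i' j'] k'] ?]|[[[i' j'] k'] ?]]] //= [] *; subst.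
- by congr inl; apply: val_inj.
- by congr (inr (inl _)); apply: val_inj.
- by congr (inr (inr _)); apply: val_inj.
Qed.

Lemma cardB : #|{: B}| = (n * (n - 1) * (2 * n - 3) %/ 2)%N.
Proof.
rewrite card_sum card_sum !card_sig.
set X := #|[pred x : 'I_n * 'I_n | x.1 < x.2]|.
have HX : (2 * X = n * (n - 1))%N.
  rewrite -sum_tri; congr (2 * _)%N.
  transitivity (#|[pred t : 'I_n * 'I_n | predT t.1 && ((fun i j : 'I_n => i < j) t.1 t.2)]|).
    by apply: eq_card.
  rewrite (@card_pair_dep _ _ predT (fun i j : 'I_n => i < j)); apply: eq_bigr => i _; exact: card_gt.
have HF : #|[pred x : ('I_n * 'I_n) * 'I_n | (x.1.1 < x.1.2) && (x.2 != x.1.1) && (x.2 != x.1.2)]| = (X * (n - 2))%N.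
  transitivity (#|[pred t : ('I_n * 'I_n) * 'I_n | (fun p : 'I_n * 'I_n => p.1 < p.2) t.1 &&
       (fun (p : 'I_n * 'I_n) (k : 'I_n) => (k != p.1) && (k != p.2)) t.1 t.2]|).
    by apply: eq_card => -[[a b] k]; rewrite !inE /= andbA.
  rewrite (@card_pair_dep _ _ (fun p : 'I_n * 'I_n => p.1 < p.2) (fun (p : 'I_n * 'I_n) (k : 'I_n) => (k != p.1) && (k != p.2))).
  rewrite (eq_bigr (fun _ => n - 2)%N); first by rewrite sum_nat_const.
  move=> [a b] /= ab.
  have -> : #|[pred k : 'I_n | (k != a) && (k != b)]| = #|~: [set a; b]|.
    by apply: eq_card => k; rewrite !inE negb_or.
  have := cardsC [set a; b]; rewrite cards2 card_ord.
  have -> : (a != b) by rewrite neq_ltn ab.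
  lia.
rewrite HF -HX -mulnA mulKn //.
case: (leqP 2 n) => h; first nia.
have -> : X = 0%N by nia.
by [].
Qed.


Local Open Scope ring_scope.
Definition ind (t : nat * ('I_n * 'I_n * 'I_n)) (bb : B) : int := Posz (key bb == t).
Definition sg (x y : 'I_n) (f : 'I_n -> 'I_n -> int) : int := if (x < y)%N then f x y else - f y x.

Definition eA a b bb := sg a b (fun x y => ind (0%N, (x, y, x)) bb).
Definition eF k i j bb := sg i j (fun x y => ind (1%N, (x, y, k)) bb).
Definition eS k i j bb := sg k i (fun x y => ind (2%N, (x, y, j)) bb).

Definition Dr bb (a b c d : 'I_n) : int :=
  if (a == d) && (b == c) then eA a b bb
  else if a == c then (if b == d then 0 else eF a b d bb)
  else if b == d then eS a c b bb
  else if b == c then - (eF a b d bb + eS a b d bb)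
  else if a == d then eF c a b bb + eS c a b bb
  else 0.

Ltac simp_neq := repeat match goal with
  | h : is_true (?x != ?y) |- context [?x == ?y] => rewrite (negbTE h)
  | h : is_true (?x != ?y) |- context [?y == ?x] => rewrite [y == x]eq_sym (negbTE h)
  end; rewrite ?eqxx /=.

Ltac contra_neq := match goal with h : is_true (?x != ?x) |- _ => by rewrite eqxx in h end.

Ltac fin_sg := rewrite /eA /eF /eS /sg; repeat (case: ltngtP => [?|?|/val_inj ?] /=; try (subst; contra_neq)); lia.

Lemma Dr_anti bb a b c d : a != b -> c != d -> Dr bb c d a b = - Dr bb a b c d.
Proof.
move=> ab cd; rewrite /Dr.
have [?|?] := eqVneq a c; have [?|?] := eqVneq a d; have [?|?] := eqVneq b c; have [?|?] := eqVneq b d;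
  subst; try contra_neq; simp_neq; try fin_sg.
Qed.

Lemma Dr_diag bb a b : a != b -> Dr bb a b a b = 0.
Proof. by move=> ab; rewrite /Dr; simp_neq. Qed.

Lemma Dr_disj bb a b c d : a != c -> a != d -> b != c -> b != d -> Dr bb a b c d = 0.
Proof. by move=> *; rewrite /Dr; simp_neq. Qed.

Lemma Dr_tri bb k i j : k != i -> k != j -> i != j ->
  Dr bb k i k j + Dr bb k i i j + Dr bb k j i j = 0.
Proof. move=> *; rewrite /Dr; simp_neq; lia. Qed.

Lemma Dr_A bb (a b : 'I_n) : (a < b)%N -> Dr bb a b b a = ind (0%N, (a, b, a)) bb.
Proof.
move=> ab; have nab : a != b by rewrite neq_ltn ab.
rewrite /Dr; simp_neq; by rewrite /eA /sg ab.
Qed.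

Lemma Dr_F bb (k i j : 'I_n) : (i < j)%N -> k != i -> k != j -> Dr bb k i k j = ind (1%N, (i, j, k)) bb.
Proof.
move=> ij ki kj; have nij : i != j by rewrite neq_ltn ij.
rewrite /Dr; simp_neq; by rewrite /eF /sg ij.
Qed.

Lemma Dr_S bb (k i j : 'I_n) : (i < j)%N -> k != i -> k != j -> Dr bb i k j k = ind (2%N, (i, j, k)) bb.
Proof.
move=> ij ki kj; have nij : i != j by rewrite neq_ltn ij.
rewrite /Dr; simp_neq; by rewrite /eS /sg ij.
Qed.

End Basis.


Local Open Scope ring_scope.
Section Beta.
Variable n : nat.
Variable bb : B n.

Definition Dg (g h : vgen n) : int := Dr bb (val g).1 (val g).2 (val h).1 (val h).2.
Definition ltg (g h : vgen n) : bool :=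
  ((val g).1 < (val h).1)%N || (((val g).1 == (val h).1) && ((val g).2 < (val h).2)%N).
Definition bet (g h : vgen n) : int := if ltg g h then Dg g h else 0.

Lemma bet0 g : bet g g = 0.
Proof. by rewrite /bet /ltg !ltnn eqxx. Qed.

Lemma bet_anti g h : bet g h - bet h g = Dg g h.
Proof.
case: g => [[a b] /= ab]; case: h => [[c d] /= cd].
rewrite /bet /ltg /Dg /=.
case: (ltngtP a c) => [h|h|/val_inj h] /=.
- have -> : (c == a) = false by apply/eqP => E; subst; rewrite ltnn in h.
  rewrite /=; lia.
- have -> : (a == c) = false by apply/eqP => E; subst; rewrite ltnn in h.
  rewrite /= (Dr_anti bb ab cd); lia.
- subst c; rewrite eqxx /=.
  case: (ltngtP b d) => [h|h|/val_inj h] /=.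
  + lia.
  + rewrite (Dr_anti bb ab cd); lia.
  + subst d; rewrite Dr_diag //; lia.
Qed.

Definition cwb w := cw bet w.

Lemma Hrel s : vrelator s -> cwb s = 0.
Proof.
case=> [[x [y [U ->]]]|[x [y [z [U [E1 [E2 [E3 ->]]]]]]]].
- have h1 := bet_anti x y; have h2 := bet0 x; have h3 := bet0 y.
  move: U; rewrite /= !inE !negb_or => /and4P[/and3P[? ? ?] /andP[? ?] ? _].
  have h4 : Dg x y = 0 by rewrite /Dg Dr_disj.
  rewrite /cwb /= /lin /=; lia.
- have h1 := bet_anti x y; have h2 := bet_anti x z; have h3 := bet_anti y z.
  have h4 := bet0 x; have h5 := bet0 y; have h6 := bet0 z.
  move: U; rewrite /= !inE !negb_or => /and3P[/andP[? ?] ? _].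
  have h7 : Dg x y + Dg x z + Dg y z = 0.
    rewrite /Dg E1 E2 E3; exact: Dr_tri.
  rewrite /cwb /= /lin /=; lia.
Qed.

End Beta.

Local Close Scope ring_scope.

Local Open Scope ring_scope.
Section Main.
Variable n : nat.
Implicit Types u v w a b g s : vword n.
Implicit Types bb : B n.

Definition r := (n * (n - 1) * (2 * n - 3) %/ 2)%N.
Definition code (b : B n) : 'I_r := cast_ord (cardB n) (enum_rank b).
Definition dec (i : 'I_r) : B n := enum_val (cast_ord (esym (cardB n)) i).
Lemma decK : cancel code dec.
Proof. by move=> b; rewrite /dec /code cast_ordK enum_rankK. Qed.
Lemma codeK : cancel dec code.
Proof. by move=> i; rewrite /dec /code enum_valK cast_ordKV. Qed.

Definition f w : 'rV[int]_r := \row_i cwb (dec i) w.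

Lemma cwb_veq bb u v : veq u v -> cwb bb u = cwb bb v.
Proof. apply: cw_veq; [exact: bet0 | exact: Hrel]. Qed.

Lemma f_veq u v : veq u v -> f u = f v.
Proof. by move=> H; apply/rowP => i; rewrite !mxE (cwb_veq _ H). Qed.

Lemma cwb_cat bb u v : G2 u -> cwb bb (u ++ v) = cwb bb u + cwb bb v.
Proof. by move=> Hu; rewrite /cwb cw_cat cross0l ?addr0 //; exact: Ztriv_G2. Qed.

Lemma f_cat u v : G2 u -> f (u ++ v) = f u + f v.
Proof. by move=> Hu; apply/rowP => i; rewrite !mxE cwb_cat. Qed.

Lemma cwb_nil bb : cwb bb [::] = 0. Proof. by []. Qed.

Lemma cwb_winv bb u : G2 u -> cwb bb (winv u) = - cwb bb u.
Proof.
move=> Hu; have := cwb_veq bb (veq_linv0 u); rewrite cwb_cat ?cwb_nil; last exact: vgen_inv.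
lia.
Qed.

Lemma cross_catr bt u v w : cross bt u (v ++ w) = cross bt u v + cross bt u w.
Proof. by rewrite /cross -sumw_add; apply: sumw_ext => x; rewrite /lin sumw_cat. Qed.

Lemma cwb_G3 bb u : G3 u -> cwb bb u = 0.
Proof.
elim=> {u} [u [a [b [Ha ->]]]|||u Hu IH|u v H _ IH].
- have Za := Ztriv_G2 Ha.
  rewrite /cwb /vcomm !cw_cat cross_catr (cross0l _ _ (Ztriv_winv Za)) (cross0l _ _ Za).
  rewrite (cross0r _ _ Za).
  have h1 := cwb_veq bb (veq_linv0 a); have h2 := cwb_veq bb (veq_linv0 b).
  move: h1 h2; rewrite /cwb !cw_cat (cross0l _ _ (Ztriv_winv Za)) /=; lia.
- by [].
- move=> u v Hu IHu _ IHv; rewrite cwb_cat ?IHu ?IHv ?addr0 //; exact: G3_G2.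
- by rewrite cwb_winv ?IH ?oppr0 //; exact: G3_G2.
- by rewrite -(cwb_veq _ H).
Qed.

Lemma f_G3 u : G3 u -> f u = 0.
Proof. by move=> H; apply/rowP => i; rewrite !mxE cwb_G3. Qed.

End Main.

Local Close Scope ring_scope.

Local Open Scope ring_scope.
Section Pow.
Variable n : nat.
Implicit Types u v w a b g s : vword n.
Implicit Types bb : B n.

Definition pw w (k : int) : vword n :=
  match k with Posz m => flatten (nseq m w) | Negz m => flatten (nseq m.+1 (winv w)) end.

Lemma flatten_nseqS m w : flatten (nseq m.+1 w) = flatten (nseq m w) ++ w.
Proof.
elim: m => [|m IH]; first by rewrite /= cats0.
by change (flatten (nseq m.+2 w)) with (w ++ flatten (nseq m.+1 w)); rewrite {1}IH catA.
Qed.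

Lemma pw_succ w k : veq (pw w (k + 1)) (pw w k ++ w).
Proof.
case: k => m.
- have -> : Posz m + 1 = Posz m.+1 by lia.
  by rewrite /pw flatten_nseqS.
- case: m => [|m].
  + have -> : Negz 0 + 1 = 0 by [].
    by rewrite /= cats0 (veq_linv0 w).
  + have -> : Negz m.+1 + 1 = Negz m by rewrite !NegzE; lia.
    by rewrite [in X in veq _ X]/pw flatten_nseqS -catA (veq_linv0 w) cats0.
Qed.

Lemma pw_pred w k : veq (pw w (k - 1)) (pw w k ++ winv w).
Proof.
have -> : pw w k = pw w ((k - 1) + 1) by rewrite subrK.
by rewrite (pw_succ w (k - 1)) -catA (veq_rinv0 w) cats0.
Qed.

Lemma pw_add w k1 k2 : veq (pw w (k1 + k2)) (pw w k1 ++ pw w k2).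
Proof.
elim/int_rect: k2 k1 => [|m IH|m IH] k1.
- by rewrite addr0 /= cats0.
- have -> : k1 + (m.+1)%:Z = (k1 + m) + 1 by lia.
  have -> : pw w (m.+1)%:Z = pw w (m%:Z + 1) by congr pw; lia.
  by rewrite pw_succ IH pw_succ catA.
- have -> : k1 + - (m.+1)%:Z = (k1 + - m%:Z) - 1 by lia.
  have -> : pw w (- (m.+1)%:Z) = pw w (- m%:Z - 1) by congr pw; lia.
  by rewrite pw_pred IH pw_pred catA.
Qed.

Lemma G2_flatten (l : seq (vword n)) : (forall x, x \in l -> G2 x) -> G2 (flatten l).
Proof.
elim: l => [|x l IH] H /=; first exact: vgen_nil.
apply: vgen_mul; first by apply: H; rewrite inE eqxx.
by apply: IH => y Hy; apply: H; rewrite inE Hy orbT.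
Qed.

Lemma G2_pw w k : G2 w -> G2 (pw w k).
Proof.
move=> Hw; case: k => m; rewrite /pw; apply: G2_flatten => x /nseqP [-> _] //.
exact: vgen_inv.
Qed.

Lemma cwb_nseq bb w m : G2 w -> cwb bb (flatten (nseq m w)) = m%:Z * cwb bb w.
Proof.
move=> Hw; elim: m => [|m IH]; first by rewrite mul0r.
rewrite flatten_nseqS cwb_cat ?IH; first lia.
by apply: G2_flatten => x /nseqP [-> _].
Qed.

Lemma cwb_pw bb w k : G2 w -> cwb bb (pw w k) = k * cwb bb w.
Proof.
move=> Hw; case: k => m; rewrite /pw cwb_nseq //; last exact: vgen_inv.
rewrite cwb_winv // NegzE; lia.
Qed.

End Pow.

Local Close Scope ring_scope.

Local Open Scope ring_scope.
Section Words.
Variable n : nat.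
Implicit Types u v w s : vword n.
Implicit Types bb : B n.

Definition mkg (a c : 'I_n) (H : a != c) : vgen n :=
  exist (fun p : 'I_n * 'I_n => p.1 != p.2) (a, c) H.

Lemma BA_1 (p : BA n) : (val p).1 != (val p).2.
Proof. by rewrite neq_ltn (valP p). Qed.
Lemma BA_2 (p : BA n) : (val p).2 != (val p).1.
Proof. by rewrite neq_ltn (valP p) orbT. Qed.
Lemma BF_ki (t : BF n) : (val t).2 != (val t).1.1.
Proof. by case/andP: (valP t) => /andP[]. Qed.
Lemma BF_kj (t : BF n) : (val t).2 != (val t).1.2.
Proof. by case/andP: (valP t). Qed.
Lemma BF_ik (t : BF n) : (val t).1.1 != (val t).2.
Proof. by rewrite eq_sym BF_ki. Qed.
Lemma BF_jk (t : BF n) : (val t).1.2 != (val t).2.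
Proof. by rewrite eq_sym BF_kj. Qed.

Definition C1 (g h : vgen n) : vword n := vcomm [:: pos g] [:: pos h].

Definition W (b : B n) : vword n :=
  match b with
  | inl p => C1 (mkg (BA_1 p)) (mkg (BA_2 p))
  | inr (inl t) => C1 (mkg (BF_ki t)) (mkg (BF_kj t))
  | inr (inr t) => C1 (mkg (BF_ik t)) (mkg (BF_jk t))
  end.

Lemma cwb_C1 bb g h : cwb bb (C1 g h) = Dg bb g h.
Proof.
have h1 := bet_anti bb g h; have h2 := bet0 bb g; have h3 := bet0 bb h.
rewrite /cwb /C1 /vcomm /= /lin /=; lia.
Qed.

Lemma cwb_W bb b : cwb bb (W b) = Posz (bb == b).
Proof.
rewrite -(inj_eq (@key_inj n)).
case: b => [p|[t|t]]; rewrite /W cwb_C1 /Dg /=.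
- case: p => [[a c] /= ac]; by rewrite Dr_A.
- case: t => [[[i j] k] /= /andP[/andP[ij ki] kj]]; by rewrite Dr_F.
- case: t => [[[i j] k] /= /andP[/andP[ij ki] kj]]; by rewrite Dr_S.
Qed.

Lemma G2_W b : G2 (W b).
Proof. by case: b => [p|[t|t]]; apply: G2_comm. Qed.

Lemma f_W b : f (W b) = delta_mx 0 (code b).
Proof.
apply/rowP => i; rewrite !mxE cwb_W /=.
have -> : (dec i == b) = (i == code b).
  apply/eqP/eqP => [<-|->]; by rewrite ?codeK ?decK.
by case: (i == code b).
Qed.

Definition sz (z : 'rV[int]_(r n)) : vword n :=
  flatten [seq pw (W (dec i)) (z 0 i) | i <- index_enum 'I_(r n)].

Lemma G2_sz z : G2 (sz z).
Proof.
apply: G2_flatten => x /mapP [i _ ->]; apply: G2_pw; exact: G2_W.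
Qed.

Lemma cwb_flatten bb (l : seq (vword n)) : (forall x, x \in l -> G2 x) ->
  cwb bb (flatten l) = \sum_(x <- l) cwb bb x.
Proof.
elim: l => [|x l IH] H /=; first by rewrite big_nil.
rewrite big_cons cwb_cat; last by apply: H; rewrite inE eqxx.
by rewrite IH // => y Hy; apply: H; rewrite inE Hy orbT.
Qed.

Lemma f_sz z : f (sz z) = z.
Proof.
apply/rowP => i0; rewrite mxE /sz cwb_flatten; last first.
  by move=> x /mapP [i _ ->]; apply: G2_pw; exact: G2_W.
rewrite big_map.
rewrite (eq_bigr (fun i => z 0 i * Posz (i0 == i))); last first.
  move=> i _; rewrite cwb_pw ?cwb_W; last exact: G2_W.
  have -> : (dec i0 == dec i) = (i0 == i) by rewrite (can_eq (@codeK n)).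
  by [].
rewrite -/(\sum_(i : 'I_(r n)) _) (bigD1 i0) //= eqxx mulr1 big1 ?addr0 // => i /negbTE.
by rewrite eq_sym => ->; rewrite mulr0.
Qed.

End Words.

Local Close Scope ring_scope.

Local Open Scope ring_scope.
Section Ker.
Variable n : nat.
Implicit Types u v w s : vword n.
Implicit Types z : 'rV[int]_(r n).

Lemma flatten_map_veq (I : Type) (l : seq I) (F G : I -> vword n) :
  (forall i, veq (F i) (G i)) -> veq (flatten (map F l)) (flatten (map G l)).
Proof. by move=> H; elim: l => [|i l IH] //=; rewrite H IH. Qed.

Lemma flatten_split (I : Type) (l : seq I) (F G : I -> vword n) :
  (forall i, G2 (F i)) -> (forall i, G2 (G i)) ->
  meq (flatten [seq F i ++ G i | i <- l]) (flatten (map F l) ++ flatten (map G l)).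
Proof.
move=> HF HG; elim: l => [|i l IH] //=.
rewrite IH -!catA; apply: meq_catl; rewrite !catA; apply: meq_catr.
apply: meq_central; exact: HG.
Qed.

Lemma sz_add z1 z2 : meq (sz (z1 + z2)) (sz z1 ++ sz z2).
Proof.
rewrite /sz.
have -> : [seq pw (W (dec i)) ((z1 + z2) 0 i) | i <- index_enum 'I_(r n)] =
          [seq pw (W (dec i)) (z1 0 i + z2 0 i) | i <- index_enum 'I_(r n)].
  by apply: eq_map => i; rewrite mxE.
rewrite (flatten_map_veq _ (fun i => pw_add _ _ _)).
apply: flatten_split => i; apply: G2_pw; exact: G2_W.
Qed.

Lemma sz0 : sz (0 : 'rV[int]_(r n)) = [::].
Proof.
rewrite /sz; elim: (index_enum _) => [|i l IH] //=.
by rewrite IH mxE cats0.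
Qed.

Lemma sz_opp z : meq (sz (- z)) (winv (sz z)).
Proof.
apply: meq_inv_r; rewrite -sz_add subrr sz0; reflexivity.
Qed.

Lemma f_nil : f ([::] : vword n) = 0.
Proof. by apply/rowP => i; rewrite !mxE. Qed.

Lemma f_winv u : G2 u -> f (winv u) = - f u.
Proof.
move=> Hu; have := f_veq (veq_linv0 u); rewrite f_cat ?f_nil; last exact: vgen_inv.
by move/eqP; rewrite addr_eq0 => /eqP.
Qed.

Definition P u := meq u (sz (f u)).

Lemma P_cat u v : G2 u -> G2 v -> P u -> P v -> P (u ++ v).
Proof. by move=> Hu Hv; rewrite /P => Pu Pv; rewrite f_cat // sz_add -Pu -Pv. Qed.

Lemma P_inv u : G2 u -> P u -> P (winv u).
Proof. by move=> Hu; rewrite /P => Pu; rewrite f_winv // sz_opp -Pu. Qed.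

Lemma P_meq u v : G2 u -> G2 v -> meq u v -> P u -> P v.
Proof.
move=> Hu Hv H; rewrite /P => Pu.
have : f (u ++ winv v) = 0 by apply: f_G3.
rewrite f_cat // f_winv // => /eqP; rewrite subr_eq0 => /eqP E.
by rewrite /P -E -H.
Qed.

Lemma P_nil : P [::].
Proof. by rewrite /P f_nil sz0. Qed.

Lemma P_veq0 u : G2 u -> veq u [::] -> P u.
Proof.
move=> Hu H; apply: (P_meq (u := [::])) => //; first exact: vgen_nil.
  by symmetry; apply: veq_meq.
exact: P_nil.
Qed.

Lemma flatten_single (I : eqType) (l : seq I) (F : I -> vword n) c :
  uniq l -> c \in l -> (forall i, i != c -> F i = [::]) -> flatten (map F l) = F c.
Proof.
elim: l => [|i l IH] //= /andP[il ul]; rewrite inE => cl H.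
case: (eqVneq i c) => [E|ic].
- subst i; rewrite -[RHS]cats0; congr (_ ++ _).
  elim: l il {IH cl ul} => [|j l IH] //= /norP[jc jl]. 
  by rewrite H 1?eq_sym // IH.
- by rewrite H // IH //; move: cl; rewrite eq_sym (negbTE ic).
Qed.

Lemma P_W b : P (W b).
Proof.
rewrite /P f_W /sz (flatten_single (c := code b)) ?index_enum_uniq ?mem_index_enum //.
- by rewrite mxE !eqxx /= decK /= cats0.
- by move=> i ic; rewrite mxE (negbTE ic) andbF.
Qed.

End Ker.

Local Close Scope ring_scope.

Local Open Scope ring_scope.
Section Cases.
Variable n : nat.
Implicit Types u v w s : vword n.

Lemma C1_rev (g h : vgen n) : winv (C1 g h) = C1 h g.
Proof. by rewrite /C1 /vcomm !winv_cat !winvK -!catA. Qed.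

Lemma G2_C1 (g h : vgen n) : G2 (C1 g h).
Proof. exact: G2_comm. Qed.

Lemma P_rev (g h : vgen n) : P (C1 h g) -> P (C1 g h).
Proof. by move=> H; rewrite -C1_rev; apply: P_inv => //; exact: G2_C1. Qed.

Lemma P_A_lt (a c : 'I_n) (H1 : a != c) (H2 : c != a) : (a < c)%N -> P (C1 (mkg H1) (mkg H2)).
Proof.
move=> ac; pose p : BA n := exist _ (a, c) ac.
have -> : C1 (mkg H1) (mkg H2) = W (inl p) by rewrite /W; congr C1; apply: val_inj.
exact: P_W.
Qed.

Lemma P_A (a c : 'I_n) (H1 : a != c) (H2 : c != a) : P (C1 (mkg H1) (mkg H2)).
Proof.
case: (ltngtP a c) => [ac|ca|/val_inj E]; first exact: P_A_lt.
- apply: P_rev; exact: P_A_lt.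
- by exfalso; move: (H1); rewrite E eqxx.
Qed.

Lemma P_F_lt (k i j : 'I_n) (H1 : k != i) (H2 : k != j) : (i < j)%N -> P (C1 (mkg H1) (mkg H2)).
Proof.
move=> ij.
have V : (((i, j), k).1.1 < ((i, j), k).1.2)%N && (((i, j), k).2 != ((i, j), k).1.1) && (((i, j), k).2 != ((i, j), k).1.2)
  by rewrite /= ij H1 H2.
pose t : BF n := exist _ ((i, j), k) V.
have -> : C1 (mkg H1) (mkg H2) = W (inr (inl t)) by rewrite /W; congr C1; apply: val_inj.
exact: P_W.
Qed.

Lemma P_F (k i j : 'I_n) (H1 : k != i) (H2 : k != j) : i != j -> P (C1 (mkg H1) (mkg H2)).
Proof.
move=> ij; case: (ltngtP i j) => [lt|gt|/val_inj E]; first exact: P_F_lt.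
- apply: P_rev; exact: P_F_lt.
- by exfalso; move: ij; rewrite E eqxx.
Qed.

Lemma P_S_lt (k i j : 'I_n) (H1 : k != j) (H2 : i != j) : (k < i)%N -> P (C1 (mkg H1) (mkg H2)).
Proof.
move=> ki.
have V : (((k, i), j).1.1 < ((k, i), j).1.2)%N && (((k, i), j).2 != ((k, i), j).1.1) && (((k, i), j).2 != ((k, i), j).1.2)
  by rewrite /= ki eq_sym H1 eq_sym H2.
pose t : BF n := exist _ ((k, i), j) V.
have -> : C1 (mkg H1) (mkg H2) = W (inr (inr t)) by rewrite /W; congr C1; apply: val_inj.
exact: P_W.
Qed.

Lemma P_S (k i j : 'I_n) (H1 : k != j) (H2 : i != j) : k != i -> P (C1 (mkg H1) (mkg H2)).
Proof.
move=> ki; case: (ltngtP k i) => [lt|gt|/val_inj E]; first exact: P_S_lt.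
- apply: P_rev; exact: P_S_lt.
- by exfalso; move: ki; rewrite E eqxx.
Qed.

End Cases.

Local Close Scope ring_scope.

Local Open Scope ring_scope.
Section Chain.
Variable n : nat.
Implicit Types u v w s p q x y z cyx czx czy : vword n.

Lemma swap p q : veq (p ++ q) (q ++ p ++ vcomm p q).
Proof. by rewrite /vcomm (veq_rinv p) (veq_rinv q). Qed.

Lemma veq_of_rinv u v : veq (u ++ winv v) [::] -> veq u v.
Proof.
move=> H; transitivity ((u ++ winv v) ++ v).
  by rewrite -catA (veq_linv0 v) cats0.
by rewrite H.
Qed.

Lemma meq_cancel_l a u v : meq (a ++ u) (a ++ v) -> meq u v.
Proof.
move=> H; rewrite -(veq_linv a u) -(veq_linv a v).
by rewrite H.
Qed.

Lemma swap3 x y z cyx czx czy :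
  veq (y ++ x) (x ++ y ++ cyx) -> veq (z ++ x) (x ++ z ++ czx) -> veq (z ++ y) (y ++ z ++ czy) ->
  G2 czx -> meq (z ++ y ++ x) (x ++ y ++ z ++ czy ++ czx ++ cyx).
Proof.
move=> h1 h2 h3 G.
rewrite h1 catA h2 -!catA.
rewrite [czx ++ _]catA (meq_central y G) -catA.
rewrite [z ++ y ++ _]catA h3 -!catA.
reflexivity.
Qed.

Lemma P_chain (k i j : 'I_n) (Hki : k != i) (Hij : i != j) (Hkj : k != j) :
  P (C1 (mkg Hki) (mkg Hij)).
Proof.
set X := mkg Hki; set Y := mkg Hkj; set Z := mkg Hij.
have R : veq [:: pos X; pos Y; pos Z] [:: pos Z; pos Y; pos X].
  apply: veq_of_rinv; apply: veq_rel; right; exists X, Y, Z.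
  by rewrite /= !inE negb_or Hki Hkj Hij.
set x := [:: pos X]; set y := [:: pos Y]; set z := [:: pos Z].
have E : meq (z ++ y ++ x) (x ++ y ++ z ++ (C1 Z Y ++ C1 Z X ++ C1 Y X)).
  apply: swap3; try exact: swap; exact: G2_C1.
have K : meq (C1 Z Y ++ C1 Z X ++ C1 Y X) [::].
  apply: (@meq_cancel_l (x ++ y ++ z)); rewrite cats0 -!catA -E.
  symmetry; apply: veq_meq; exact: R.
have K2 : meq (C1 Z X) (winv (C1 Z Y) ++ winv (C1 Y X)).
  have := meq_inv_r K => {}K.
  rewrite -K -catA (veq_rinv0 (C1 Y X)) cats0; reflexivity.
apply: P_rev; apply: (P_meq _ _ (symmetry K2)); try exact: G2_C1.
  by apply: vgen_mul; apply: vgen_inv; exact: G2_C1.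
apply: P_cat; try (apply: vgen_inv; exact: G2_C1).
- apply: P_inv; first exact: G2_C1.
  apply: P_S; by rewrite eq_sym.
- apply: P_inv; first exact: G2_C1.
  apply: P_F; by rewrite eq_sym.
Qed.

End Chain.

Local Close Scope ring_scope.

Local Open Scope ring_scope.
Section Final.
Variable n : nat.
Implicit Types u v w s a b : vword n.

Lemma P_diag (g : vgen n) : P (C1 g g).
Proof.
apply: P_veq0; first exact: G2_C1.
by rewrite /C1 /vcomm (veq_linv [:: pos g]) (veq_linv0 [:: pos g]).
Qed.

Lemma P_disj (a b c d : 'I_n) (H1 : a != b) (H2 : c != d) :
  a != c -> a != d -> b != c -> b != d -> P (C1 (mkg H1) (mkg H2)).
Proof.
move=> ac ad bc bd; apply: P_veq0; first exact: G2_C1.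
set x := [:: pos (mkg H1)]; set y := [:: pos (mkg H2)].
have R : veq (y ++ x ++ winv y ++ winv x) [::].
  apply: veq_rel; left; exists (mkg H2), (mkg H1); split => //.
  by rewrite /= !inE !negb_or H2 [c == a]eq_sym ac [c == b]eq_sym bc [d == a]eq_sym ad [d == b]eq_sym bd H1.
transitivity (winv x ++ winv y ++ (y ++ x ++ winv y ++ winv x) ++ x ++ y).
  by rewrite R.
by rewrite -!catA (veq_linv y) (veq_linv x) (veq_linv x) (veq_linv0 y).
Qed.

Lemma P_gen (g h : vgen n) : P (C1 g h).
Proof.
case: g => [[a b] H1]; case: h => [[c d] H2].
change (P (C1 (mkg H1) (mkg H2))).
case: (eqVneq a d) => [ad|ad]; case: (eqVneq b c) => [bc|bc].
- subst; exact: P_A.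
- subst d; apply: P_rev; apply: P_chain; by rewrite eq_sym.
- subst c; exact: P_chain.
- case: (eqVneq a c) => [ac|ac].
  + subst c; case: (eqVneq b d) => [bd|bd].
    * subst d; have -> : H2 = H1 by apply: eq_irrelevance.
      exact: P_diag.
    * exact: P_F.
  + case: (eqVneq b d) => [bd|bd].
    * subst d; exact: P_S.
    * exact: P_disj.
Qed.

Lemma P_pos_letter (g : vgen n) (y : vletter n) : P (vcomm [:: pos g] [:: y]).
Proof.
case: y => h [|]; first exact: (P_gen g h).
have E := comm_invr [:: pos g] (pos h).
apply: (P_meq _ _ (symmetry E)); try exact: G2_comm.
  apply: vgen_inv; exact: G2_comm.
apply: P_inv; first exact: G2_comm.
exact: (P_gen g h).
Qed.

Lemma P_letters (x y : vletter n) : P (vcomm [:: x] [:: y]).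
Proof.
case: x => g [|]; first exact: P_pos_letter.
have E := comm_invl (pos g) [:: y].
apply: (P_meq _ _ (symmetry E)); try exact: G2_comm.
  apply: vgen_inv; exact: G2_comm.
apply: P_inv; first exact: G2_comm.
exact: P_pos_letter.
Qed.

Lemma P_comm1 (x : vletter n) b : P (vcomm [:: x] b).
Proof.
elim: b => [|y b IH].
  apply: P_veq0; [exact: G2_comm | exact: comm_nilr].
have E := comm_catr [:: x] [:: y] b.
apply: (P_meq _ _ (symmetry E)); try exact: G2_comm.
  apply: vgen_mul; exact: G2_comm.
apply: P_cat => //; try exact: G2_comm.
exact: P_letters.
Qed.

Lemma P_comm a b : P (vcomm a b).
Proof.
elim: a => [|x a IH].
  apply: P_veq0; [exact: G2_comm | exact: comm_nill].
have E := comm_catl [:: x] a b.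
apply: (P_meq _ _ (symmetry E)); try exact: G2_comm.
  apply: vgen_mul; exact: G2_comm.
apply: P_cat => //; try exact: G2_comm.
exact: P_comm1.
Qed.

Lemma P_G2 u : G2 u -> P u.
Proof.
elim=> {u} [u [a [b [_ ->]]]|||u Hu IH|u v H Hu IH].
- exact: P_comm.
- exact: P_nil.
- by move=> u v Hu IHu Hv IHv; apply: P_cat.
- exact: P_inv.
- apply: (P_meq Hu (vgen_eq H Hu)) => //; exact: veq_meq.
Qed.

Lemma kernel u : G2 u -> f u = 0 -> G3 u.
Proof.
move=> Hu fu; have := P_G2 Hu; rewrite /P fu sz0 => H.
by apply/G3_meq.
Qed.

End Final.

Local Close Scope ring_scope.
Theorem proposition5p7 (n : nat) : 3 <= n ->
  G2modG3_free_of_rank n (n * (n - 1) * (2 * n - 3) %/ 2).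
Proof.
move=> _; exists (@f n); split; [|split].
- move=> u v; rewrite G2E => Hu Hv; exact: f_cat.
- move=> z; exists (sz z); split; [rewrite G2E; exact: G2_sz | exact: f_sz].
- move=> u; rewrite G2E G3E => Hu; split; [exact: kernel | exact: f_G3].
Qed.
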